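(* Let $f:\mathbb{R}^n\to\mathbb{R}^n$ be locally Lipschitz, and let $V_1,V_2\in C^1(\mathbb{R}^n)$, continuous $N_1,N_2:\mathbb{R}^n\to[0,\infty)$, and continuous $h:[0,\infty)\to[0,\infty)$ with $h(0)=0$ and $\sup_{r>0}h(r)/r<\infty$ satisfy $\nabla V_1\cdot f\le -N_1$ and $\nabla V_2\cdot f\le -N_2+h(N_1)$ on $\mathbb{R}^n$. Assume every solution is defined and bounded on $[0,\infty)$ and that along every solution the maps $t\mapsto N_i(x(t))$ are uniformly continuous. Suppose $E:=\{x:N_1(x)=0,\ N_2(x)=0\}$ coincides with the equilibrium set $E_f:=\{x:f(x)=0\}$, and every equilibrium is Lyapunov stable. Then every solution converges to a single equilibrium in $E$ (its $\omega$-limit set is a singleton in $E$), and each equilibrium is semistable.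
   Context: A point $z$ is Lyapunov stable if for every neighborhood $U$ of $z$ there is a neighborhood $V\subset U$ of $z$ such that every solution starting in $V$ remains in $U$ for all $t\ge0$. An equilibrium $\bar x\in E_f$ is semistable if it is Lyapunov stable and there exists $\delta>0$ such that every solution with $\|x(0)-\bar x\|\le\delta$ converges to some (possibly different) Lyapunov stable equilibrium in $E_f$. *)

(* Defs.v *)
From HB Require Import structures.
From mathcomp Require Import all_boot all_order all_algebra.
From mathcomp Require Import all_classical all_reals all_analysis.
Set Implicit Arguments. Unset Strict Implicit. Unset Printing Implicit Defensive.
Import Order.TTheory GRing.Theory Num.Theory.
Import numFieldNormedType.Exports.
Local Open Scope classical_set_scope.
Local Open Scope ring_scope.

Section Defs.
Variables (R : realType) (n : nat).
Notation V := 'rV[R]_n.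

Definition locally_lipschitz (f : V -> V) : Prop :=
  forall x : V, exists2 r : R, 0 < r &
    exists L : R, forall y z : V, `|y - x| < r -> `|z - x| < r ->
      `|f y - f z| <= L * `|y - z|.

Definition C1 (W : V -> R) : Prop :=
  (forall x : V, differentiable W x) /\
  (forall v : V, continuous (fun x : V => 'D_v W x)).

Definition solution (f : V -> V) (x : R -> V) : Prop :=
  {within `[0, +oo[, continuous x} /\
  (forall t : R, 0 < t -> derivable x t 1 /\ 'D_1 x t = f (x t)).

Definition equilibria (f : V -> V) : set V := [set z | f z = 0].

Definition lyapunov_stable (f : V -> V) (z : V) : Prop :=
  forall U : set V, nbhs z U ->
    exists W : set V, [/\ nbhs z W, W `<=` U &
      forall x : R -> V, solution f x -> W (x 0) ->
        forall t : R, 0 <= t -> U (x t)].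

Definition semistable (f : V -> V) (z : V) : Prop :=
  [/\ z \in equilibria f, lyapunov_stable f z &
    exists2 d : R, 0 < d &
      forall x : R -> V, solution f x -> `|x 0 - z| <= d ->
        exists2 w : V, (w \in equilibria f /\ lyapunov_stable f w) &
          x t @[t --> +oo] --> w].

Definition omega_limit (x : R -> V) : set V :=
  [set p | exists2 s : nat -> R, s n @[n --> \oo] --> +oo &
                                 x (s n) @[n --> \oo] --> p].

Definition unif_cont_on_half_line (g : R -> R) : Prop :=
  forall e : R, 0 < e -> exists2 d : R, 0 < d &
    forall s t : R, 0 <= s -> 0 <= t -> `|s - t| < d -> `|g s - g t| < e.

End Defs.

(* Main.v *)
Require Import Defs.
From HB Require Import structures.
From mathcomp Require Import all_boot all_order all_algebra.
From mathcomp Require Import all_classical all_reals all_analysis.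
From mathcomp Require Import lra.
Import Order.TTheory GRing.Theory Num.Theory.
Import numFieldNormedType.Exports.
Local Open Scope classical_set_scope.
Local Open Scope ring_scope.
Lemma shiftD (R : realType) n (x : R -> 'rV[R]_n) a s :
  derivable x (s + a) 1 ->
  derivable (fun u => x (u + a)) s 1 /\ 'D_1 (fun u => x (u + a)) s = 'D_1 x (s + a).
Proof.
have E : (fun h : R => h^-1 *: (((fun u => x (u + a)) \o shift s) (h *: 1) - x (s + a)))
  = (fun h => h^-1 *: ((x \o shift (s + a)) (h *: 1) - x (s + a))).
  by apply: funext => h; rewrite /= addrA.
by rewrite /derivable /derive E.
Qed.

Lemma shift_sol (R : realType) n (f : 'rV[R]_n -> 'rV[R]_n) (x : R -> 'rV[R]_n) a :
  solution f x -> 0 < a -> solution f (fun u => x (u + a)).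
Proof.
move=> [_ Hx] a0; split.
  apply: continuous_in_subspaceT => s; rewrite inE /= in_itv /= andbT => s0.
  have sa : 0 < s + a by rewrite ltr_wpDl.
  apply: continuous_comp; first by apply: cvgD; [exact: cvg_id | exact: cvg_cst].
  apply: differentiable_continuous; apply/derivable1_diffP; exact: (Hx _ sa).1.
move=> s s0; have sa : 0 < s + a by rewrite addr_gt0.
have [d1 d2] := Hx _ sa.
have [e1 e2] := @shiftD R n x a s d1.
by split => //; rewrite e2.
Qed.

Lemma clN (R : realType) n (N : 'rV[R]_n -> R) (x : R -> 'rV[R]_n) z :
  continuous N -> (forall p, 0 <= N p) ->
  (forall e, 0 < e -> exists2 T, 0 < T & forall t, T <= t -> N (x t) < e) ->
  cluster (x t @[t --> +oo]) z -> N z = 0.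
Proof.
move=> cN N0 Hs cl.
apply/eqP; rewrite eq_le N0 andbT; rewrite leNgt; apply/negP => c0.
have c20 : 0 < N z / 2 by rewrite divr_gt0.
have [T T0 HT] := Hs _ c20.
have A1 : (x t @[t --> +oo]) [set p | N p < N z / 2].
  exists T; split; first exact: num_real.
  by move=> t Tt; apply: HT; rewrite ltW.
have B1 : nbhs z (N @^-1` ball (N z) (N z / 2)).
  by apply: cN; apply: nbhsx_ballx.
have [p [/= Hp1 Hp2]] := cl _ _ A1 B1.
move: Hp2; rewrite /ball /= ltr_norml => /andP[_ h]; lra.
Qed.
Lemma drop (R : realType) (g N : R -> R) (c s t : R) :
  (forall t, 0 < t -> derivable g t 1 /\ 'D_1 g t <= - N t) ->
  0 < s -> s < t -> (forall u, s < u -> u < t -> c <= N u) ->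
  g t - g s <= - (c * (t - s)).
Proof.
move=> Hg s0 st Hc.
have H1 : forall x, x \in `]s, t[ -> is_derive x 1 g ('D_1 g x).
  move=> x; rewrite in_itv /= => /andP[sx xt].
  by apply: derivableP; apply: (Hg x (lt_trans s0 sx)).1.
have H2 : {within `[s, t], continuous g}.
  apply: derivable_within_continuous => u; rewrite in_itv /= => /andP[su _].
  exact: (Hg u (lt_le_trans s0 su)).1.
have [x xin ->] := MVT st H1 H2.
move: xin; rewrite in_itv /= => /andP[sx xt].
have x0 : 0 < x by exact: lt_trans s0 sx.
rewrite -mulNr; apply: ler_wpM2r; first by rewrite subr_ge0 ltW.
apply: le_trans (Hg x x0).2 _.
by rewrite lerN2 Hc.
Qed.
Lemma barb (R : realType) (g N : R -> R) :
  (forall t, 0 < t -> derivable g t 1 /\ 'D_1 g t <= - N t) ->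
  (forall t, 0 <= N t) ->
  unif_cont_on_half_line N ->
  (exists B, forall t, 0 < t -> B <= g t) ->
  forall e, 0 < e -> exists2 T, 0 < T & forall t, T <= t -> N t < e.
Proof.
move=> Hg N0 Nu [B HB] e e0.
have mono : forall s t, 0 < s -> s <= t -> g t <= g s.
  move=> s t s0; rewrite le_eqVlt => /predU1P[-> //|st].
  have := @drop R g N 0 s t Hg s0 st (fun u _ _ => N0 u).
  by rewrite mul0r oppr0 subr_le0.
set S := [set - g t | t in [set t : R | 0 < t]].
have hS : has_sup S.
  split; first by exists (- g 1), 1 => //=.
  exists (- B) => _ [t /= t0 <-]; rewrite lerN2; exact: HB.
have e20 : 0 < e / 2 by rewrite divr_gt0.
have [d d0 Hd] := Nu _ e20.
have d20 : 0 < d / 2 by rewrite divr_gt0.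
have ep0 : 0 < e / 2 * (d / 2) by rewrite mulr_gt0.
have [_ [T0 /= T00 <-] HT0] := sup_adherent ep0 hS.
exists T0 => // t T0t.
rewrite ltNge; apply/negP => Nt.
have t0 : 0 < t by exact: lt_le_trans T00 T0t.
have td : t < t + d / 2 by rewrite ltrDl.
have Hc : forall u, t < u -> u < t + d / 2 -> e / 2 <= N u.
  move=> u tu ut.
  have : `|N u - N t| < e / 2.
    apply: Hd; rewrite ?ltW //; first exact: lt_trans t0 tu.
    rewrite gtr0_norm ?subr_gt0 // ltrBlDl.
    apply: lt_le_trans ut _; rewrite lerD2l; lra.
  rewrite ltr_norml => /andP[h _]; lra.
have := @drop R g N _ t (t + d / 2) Hg t0 td Hc.
rewrite addrAC subrr add0r => hdrop.
have := sup_upper_bound hS.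
move=> /(_ (- g (t + d / 2))).
have : S (- g (t + d / 2)) by exists (t + d / 2) => //=; exact: lt_trans t0 td.
move=> Sm /(_ Sm) hub.
have := mono _ _ T00 T0t => hm.
lra.
Qed.
Lemma chain (R : realType) n (W : 'rV[R]_n -> R) (x : R -> 'rV[R]_n) t :
  (forall p, differentiable W p) -> derivable x t 1 ->
  derivable (W \o x) t 1 /\ 'D_1 (W \o x) t = 'D_('D_1 x t) W (x t).
Proof.
move=> dW dx; have dx' := dx; move/derivable1_diffP: dx' => dx'.
have dc : differentiable (W \o x) t by apply: differentiable_comp.
split; first exact/derivable1_diffP.
rewrite deriveE // diff_comp // deriveE //= deriveE //.
Qed.

Lemma combo (R : realType) n (V1 V2 : 'rV[R]_n -> R) (M : R) :
  (forall p, differentiable V1 p) -> (forall p, differentiable V2 p) ->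
  (forall p, differentiable (V2 + M *: V1) p) /\
  forall p v, 'D_v (V2 + M *: V1) p = 'D_v V2 p + M * 'D_v V1 p.
Proof.
move=> d1 d2; split=> [p|p v]; first by apply: differentiableD => //; apply: differentiableZ.
rewrite deriveD //; last by apply: diff_derivable; apply: differentiableZ.
  by rewrite deriveZ //; exact: diff_derivable.
exact: diff_derivable.
Qed.
Lemma ballK (R : realType) n (M : R) : compact [set p : 'rV[R]_n | `|p| <= M].
Proof.
apply: bounded_closed_compact.
  exists M; split; first exact: num_real.
  by move=> M' MM' p /= pM; apply: le_trans pM (ltW MM').
have -> : [set p : 'rV[R]_n | `|p| <= M] = (@Num.norm _ _) @^-1` [set r | r <= M] by [].
apply: (proj1 (continuous_closedP _)); last exact: (@closed_le R M).
exact: norm_continuous.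
Qed.

Lemma lowb (R : realType) n (W : 'rV[R]_n -> R) (M : R) :
  continuous W -> exists B, forall p, `|p| <= M -> B <= W p.
Proof.
move=> cW.
have cK := @ballK R n M.
have := compact_bounded (continuous_compact (continuous_subspaceT cW) cK).
move=> [B [_ HB]].
exists (- (B + 1)) => p pM.
have : `|W p| <= B + 1 by apply: HB; [lra | exists p].
rewrite ler_norml => /andP[h _] //.
Qed.

Theorem corollary2p7 (R : realType) (n : nat) (f : 'rV[R]_n -> 'rV[R]_n)
  (V1 V2 N1 N2 : 'rV[R]_n -> R) (h : R -> R) :
  locally_lipschitz f ->
  C1 V1 -> C1 V2 ->
  continuous N1 -> continuous N2 ->
  (forall x, 0 <= N1 x) -> (forall x, 0 <= N2 x) ->
  {within `[0, +oo[, continuous h} ->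
  (forall r, 0 <= r -> 0 <= h r) ->
  h 0 = 0 ->
  (exists M : R, forall r, 0 < r -> h r / r <= M) ->
  (forall x, 'D_(f x) V1 x <= - N1 x) ->
  (forall x, 'D_(f x) V2 x <= - N2 x + h (N1 x)) ->
  (forall x0, exists x, solution f x /\ x 0 = x0) ->
  (forall x, solution f x -> exists M : R, forall t, 0 <= t -> `|x t| <= M) ->
  (forall x, solution f x ->
     unif_cont_on_half_line (fun t => N1 (x t)) /\
     unif_cont_on_half_line (fun t => N2 (x t))) ->
  [set x | N1 x = 0 /\ N2 x = 0] = equilibria f ->
  (forall z, z \in equilibria f -> lyapunov_stable f z) ->
  (forall x, solution f x ->
     exists2 z, z \in [set y | N1 y = 0 /\ N2 y = 0] &
       x t @[t --> +oo] --> z /\ omega_limit x = [set z]) /\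
  (forall z, z \in equilibria f -> semistable f z).
Proof.
move=> _ [dV1 _] [dV2 _] cN1 cN2 N10 N20 _ _ h0 [Mh HMh] D1 D2 _ bnd uc Eeq stab.
have hle : forall r, 0 <= r -> h r <= `|Mh| * r.
  move=> r; rewrite le_eqVlt => /predU1P[<-|r0]; first by rewrite h0 mulr0.
  have := HMh r r0; rewrite ler_pdivrMr // => hr.
  apply: le_trans hr _; apply: ler_wpM2r; [exact: ltW | exact: ler_norm].
have part1 : forall x, solution f x ->
     exists2 z, z \in [set y | N1 y = 0 /\ N2 y = 0] &
       x t @[t --> +oo] --> z /\ omega_limit x = [set z].
  move=> x sx.
  have [Mx HMx] := bnd x sx.
  have [uc1 uc2] := uc x sx.
  case: (sx) => _ Hx.
  have cV1 : continuous V1 by move=> p; apply: differentiable_continuous.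
  have [dW DW] := @combo R n V1 V2 `|Mh| dV1 dV2.
  have cW : continuous (V2 + `|Mh| *: V1) by move=> p; apply: differentiable_continuous.
  have H1 : forall t, 0 < t -> derivable (V1 \o x) t 1 /\
      'D_1 (V1 \o x) t <= - (fun t => N1 (x t)) t.
    move=> t t0; have [d1 d2] := Hx t t0.
    have [c1 c2] := @chain R n V1 x t dV1 d1.
    by split => //; rewrite c2 d2; exact: D1.
  have LB1 : exists B, forall t, 0 < t -> B <= (V1 \o x) t.
    have [B HB] := @lowb R n V1 Mx cV1.
    by exists B => t t0; apply: HB; apply: HMx; rewrite ltW.
  have ev1 := @barb R (V1 \o x) (fun t => N1 (x t)) H1 (fun t => N10 _) uc1 LB1.
  have H2 : forall t, 0 < t -> derivable ((V2 + `|Mh| *: V1) \o x) t 1 /\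
      'D_1 ((V2 + `|Mh| *: V1) \o x) t <= - (fun t => N2 (x t)) t.
    move=> t t0; have [d1 d2] := Hx t t0.
    have [c1 c2] := @chain R n _ x t dW d1.
    split => //; rewrite c2 d2 DW.
    have a1 := D1 (x t); have a2 := D2 (x t).
    have a3 : `|Mh| * 'D_(f (x t)) V1 (x t) <= `|Mh| * - N1 (x t).
      by apply: ler_wpM2l.
    rewrite mulrN in a3.
    have a4 := hle _ (N10 (x t)).
    rewrite /=; lra.
  have LB2 : exists B, forall t, 0 < t -> B <= ((V2 + `|Mh| *: V1) \o x) t.
    have [B HB] := @lowb R n _ Mx cW.
    by exists B => t t0; apply: HB; apply: HMx; rewrite ltW.
  have ev2 := @barb R _ (fun t => N2 (x t)) H2 (fun t => N20 _) uc2 LB2.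
  have FK : (x t @[t --> +oo]) [set p | `|p| <= Mx].
    exists 0; split; first exact: num_real.
    by move=> t t0; apply: HMx; rewrite ltW.
  have [z [_ clz]] := @ballK R n Mx (x t @[t --> +oo]) _ FK.
  have z1 : N1 z = 0 := @clN R n N1 x z cN1 N10 ev1 clz.
  have z2 : N2 z = 0 := @clN R n N2 x z cN2 N20 ev2 clz.
  have zE : equilibria f z by rewrite -Eeq.
  have stz := stab z (mem_set zE).
  have hconv : x t @[t --> +oo] --> z.
    move=> U /stz [W [Wz WU HW]].
    have A1 : (x t @[t --> +oo]) [set p | exists2 t, 0 < t & p = x t].
      exists 0; split; first exact: num_real.
      by move=> t t0; exists t.
    have [p [[t0 t00 ->] Wp]] := clz _ _ A1 Wz.
    exists t0; split; first exact: num_real.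
    move=> t tt0.
    have := HW _ (@shift_sol R n f x t0 sx t00).
    rewrite add0r => /(_ Wp (t - t0)).
    rewrite subrK; apply; rewrite subr_ge0 ltW //.
  exists z; first by apply/mem_set.
  split => //.
  apply/seteqP; split => p.
    move=> [s hs hxs].
    have hz : (x (s k)) @[k --> \oo] --> z.
      by move=> U hU; exact: (hs _ (hconv _ hU)).
    exact: (norm_cvg_unique hxs hz).
  move=> ->; exists (fun k => k%:R); first exact: cvgr_idn.
  move=> U hU.
  exact: (@cvgr_idn R _ (hconv _ hU)).
split => // z zE; split => //; first exact: stab.
exists 1 => // y sy _.
have [w wE [hw _]] := part1 y sy.
have wE' : w \in equilibria f by rewrite -Eeq.
by exists w => //; split => //; apply: stab.
Qed.
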